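(* For every hyperstonean locale $H$, the Boolean algebra $\mathrm{COpen}(H)$ of compact opens of $H$ is a localizable Boolean algebra, and for every localizable Boolean algebra $A$, the frame $\mathrm{Idl}(A)$ of ideals of $A$ is a hyperstonean locale. The adjoint equivalence between Stonean locales (with open maps) and the opposite of complete Boolean algebras (with supremum-preserving homomorphisms), given by $\mathrm{COpen}$ and $\mathrm{Ideal}$, restricts to an adjoint equivalence $\mathsf{HStoneanLoc}\simeq\mathsf{LBAlg}^{\mathrm{op}}=\mathsf{MLoc}$.
   Context: Frames, locales: a frame is a poset with finite meets and arbitrary joins, binary meets distributing over joins; locales are the opposite category; a locale map $f$ has frame homomorphism $f^*$. $x\to y=\sup\{w:w\wedge x\le y\}$, $\neg x=x\to0$. A locale map is open if $f^*$ preserves arbitrary meets and Heyting implications. Compact open $a$: $\bigvee S\ge a$ implies $\bigvee F\ge a$ for some finite $F\subset S$. Coherent: compact opens closed under finite meets (including top) and generate under joins; regular: $y=\bigvee\{x:\neg x\vee y=1\}$; extremally disconnected: $\neg x\vee\neg\neg x=1$. Stonean locale: coherent, regular, extremally disconnected. A continuous valuation $\nu:L\to[0,\infty)$: $\nu(0)=0$, modular, monotone, preserving directed suprema; normal if $\nu(\neg\neg a)=\nu(a)$. A hyperstonean locale is a Stonean locale such that for each $a\neq0$ there is a normal valuation $\nu$ with $\nu(a)\ne0$; $\mathsf{HStoneanLoc}$ has open locale maps as morphisms. A Boolean algebra $A$ is localizable if complete and $1$ is the supremum of all $a$ for which $\{b\le a\}$ admits a faithful continuous valuation; $\mathsf{LBAlg}$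 has supremum-preserving Boolean homomorphisms as morphisms. An ideal of a distributive lattice is a down-closed subset closed under finite joins; $\mathrm{Ideal}(A)$ is the locale whose frame is the set of ideals of $A$ ordered by inclusion. The unit $H\to\mathrm{Ideal}(\mathrm{COpen}(H))$ sends an ideal to its join, and $a\in A$ corresponds to its principal ideal. *)

(* Defs.v *)
(* Everything is stated order-theoretically: a frame / Boolean
   algebra is a carrier type T together with its partial order le, and all
   lattice operations are expressed through (unique) least upper bounds /
   greatest lower bounds. *)
From Stdlib Require Import Reals List.
Open Scope R_scope.

Section Order.
Context {T : Type} (le : T -> T -> Prop).

Definition is_poset : Prop :=
  (forall x, le x x) /\ (forall x y z, le x y -> le y z -> le x z) /\
  (forall x y, le x y -> le y x -> x = y).

Definition upper (S : T -> Prop) (u : T) : Prop := forall x, S x -> le x u.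
Definition lower (S : T -> Prop) (l : T) : Prop := forall x, S x -> le l x.
Definition lub (S : T -> Prop) (u : T) : Prop :=
  upper S u /\ forall v, upper S v -> le u v.
Definition glb (S : T -> Prop) (l : T) : Prop :=
  lower S l /\ forall v, lower S v -> le v l.

Definition pair (x y : T) : T -> Prop := fun z => z = x \/ z = y.
Definition is_join (x y j : T) : Prop := lub (pair x y) j.
Definition is_meet (x y m : T) : Prop := glb (pair x y) m.
Definition is_top (t : T) : Prop := forall x, le x t.
Definition is_bot (b : T) : Prop := forall x, le b x.

Definition is_frame : Prop :=
  is_poset /\ (forall S, exists u, lub S u) /\ (forall x y, exists m, is_meet x y m) /\
  (forall x S s m, lub S s -> is_meet x s m ->
     lub (fun y => exists t, S t /\ is_meet x t y) m).

Definition is_imp (x y i : T) : Prop :=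
  lub (fun w => forall m, is_meet w x m -> le m y) i.
Definition is_neg (x n : T) : Prop := forall b, is_bot b -> is_imp x b n.

Definition compact (a : T) : Prop :=
  forall S u, lub S u -> le a u ->
  exists l : list T, (forall x, In x l -> S x) /\
     exists v, lub (fun x => In x l) v /\ le a v.

Definition coherent : Prop :=
  (forall a b m, compact a -> compact b -> is_meet a b m -> compact m) /\
  (forall t, is_top t -> compact t) /\
  (forall x, lub (fun c => compact c /\ le c x) x).

Definition regular : Prop :=
  forall y, lub (fun x => exists n, is_neg x n /\ forall t, is_top t -> is_join n y t) y.

Definition extremally_disconnected : Prop :=
  forall x n nn t, is_neg x n -> is_neg n nn -> is_top t -> is_join n nn t.

Definition stonean : Prop :=
  is_frame /\ coherent /\ regular /\ extremally_disconnected.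

Definition directed (S : T -> Prop) : Prop :=
  (exists s, S s) /\ forall a b, S a -> S b -> exists c, S c /\ le a c /\ le b c.

Definition continuous_valuation (nu : T -> R) : Prop :=
  (forall x, 0 <= nu x) /\
  (forall b, is_bot b -> nu b = 0) /\
  (forall x y j m, is_join x y j -> is_meet x y m -> nu j + nu m = nu x + nu y) /\
  (forall x y, le x y -> nu x <= nu y) /\
  (forall S u, directed S -> lub S u ->
     Raxioms.is_lub (fun r => exists s, S s /\ r = nu s) (nu u)).

Definition normal_valuation (nu : T -> R) : Prop :=
  forall a n nn, is_neg a n -> is_neg n nn -> nu nn = nu a.

Definition hyperstonean : Prop :=
  stonean /\
  forall a, ~ is_bot a ->
    exists nu, continuous_valuation nu /\ normal_valuation nu /\ nu a <> 0.

Definition is_cba : Prop :=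
  is_poset /\ (forall S, exists u, lub S u) /\
  (forall x y, exists m, is_meet x y m) /\
  (forall x y z j m a b r, is_join y z j -> is_meet x j m -> is_meet x y a ->
      is_meet x z b -> is_join a b r -> m = r) /\
  (forall x, exists c, (forall t, is_top t -> is_join x c t) /\
                       (forall b, is_bot b -> is_meet x c b)).

(* a faithful continuous valuation on the principal downset {b <= a}
   (joins, meets, bottom and suprema there are those of the ambient algebra) *)
Definition faithful_cv_below (a : T) (nu : T -> R) : Prop :=
  (forall x, le x a -> 0 <= nu x) /\
  (forall b, is_bot b -> nu b = 0) /\
  (forall x y j m, le x a -> le y a -> is_join x y j -> is_meet x y m ->
      nu j + nu m = nu x + nu y) /\
  (forall x y, le x a -> le y a -> le x y -> nu x <= nu y) /\
  (forall S u, (forall s, S s -> le s a) -> directed S -> lub S u ->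
     Raxioms.is_lub (fun r => exists s, S s /\ r = nu s) (nu u)) /\
  (forall b, le b a -> nu b = 0 -> is_bot b).

Definition localizable : Prop :=
  is_cba /\
  forall t, is_top t -> lub (fun a => exists nu, faithful_cv_below a nu) t.

Definition is_ideal (I : T -> Prop) : Prop :=
  (forall x y, le x y -> I y -> I x) /\
  (forall b, is_bot b -> I b) /\
  (forall x y j, I x -> I y -> is_join x y j -> I j).

End Order.

Definition copen_t {T : Type} (le : T -> T -> Prop) : Type := {x : T | compact le x}.
Definition copen_le {T : Type} (le : T -> T -> Prop) (x y : copen_t le) : Prop :=
  le (proj1_sig x) (proj1_sig y).

Definition ideal_t {T : Type} (le : T -> T -> Prop) : Type := {I : T -> Prop | is_ideal le I}.
Definition ideal_le {T : Type} (le : T -> T -> Prop) (I J : ideal_t le) : Prop :=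
  forall x, proj1_sig I x -> proj1_sig J x.

Definition image {A B : Type} (f : A -> B) (S : A -> Prop) : B -> Prop :=
  fun y => exists x, S x /\ y = f x.

Definition frame_hom {A B : Type} (leA : A -> A -> Prop) (leB : B -> B -> Prop)
  (f : A -> B) : Prop :=
  (forall S u, lub leA S u -> lub leB (image f S) (f u)) /\
  (forall x y m, is_meet leA x y m -> is_meet leB (f x) (f y) (f m)) /\
  (forall t, is_top leA t -> is_top leB (f t)).

(* f is the frame homomorphism f^* of an open locale map: it moreover
   preserves arbitrary meets and Heyting implications *)
Definition open_frame_hom {A B : Type} (leA : A -> A -> Prop) (leB : B -> B -> Prop)
  (f : A -> B) : Prop :=
  frame_hom leA leB f /\
  (forall S l, glb leA S l -> glb leB (image f S) (f l)) /\
  (forall x y i, is_imp leA x y i -> is_imp leB (f x) (f y) (f i)).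

Definition sup_bool_hom {A B : Type} (leA : A -> A -> Prop) (leB : B -> B -> Prop)
  (g : A -> B) : Prop :=
  (forall S u, lub leA S u -> lub leB (image g S) (g u)) /\
  (forall x y m, is_meet leA x y m -> is_meet leB (g x) (g y) (g m)) /\
  (forall t, is_top leA t -> is_top leB (g t)) /\
  (forall x c, (forall t, is_top leA t -> is_join leA x c t) ->
               (forall b, is_bot leA b -> is_meet leA x c b) ->
               (forall t, is_top leB t -> is_join leB (g x) (g c) t) /\
               (forall b, is_bot leB b -> is_meet leB (g x) (g c) b)).

Definition order_iso {A B : Type} (leA : A -> A -> Prop) (leB : B -> B -> Prop)
  (f : A -> B) : Prop :=
  (forall y, exists x, f x = y) /\ (forall x y, f x = f y -> x = y) /\
  (forall x y, leA x y <-> leB (f x) (f y)).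

(* Main.v *)
From Stdlib Require Import List Reals Lra Classical ClassicalEpsilon FunctionalExtensionality PropExtensionality ProofIrrelevance.
Require Import Defs.


Lemma set_ext {A} (P Q : A -> Prop) : (forall x, P x <-> Q x) -> P = Q.
Proof. intros H; apply functional_extensionality; intros x; apply propositional_extensionality; auto. Qed.

Lemma lub_uniq_po {T} (le : T -> T -> Prop) : is_poset le ->
  forall S u v, lub le S u -> lub le S v -> u = v.
Proof. intros [_ [_ A]] S u v [Hu1 Hu2] [Hv1 Hv2]. apply A; auto. Qed.

Lemma glb_uniq_po {T} (le : T -> T -> Prop) : is_poset le ->
  forall S u v, glb le S u -> glb le S v -> u = v.
Proof. intros [_ [_ A]] S u v [Hu1 Hu2] [Hv1 Hv2]. apply A; auto. Qed.

Class CL {T : Type} (le : T -> T -> Prop) : Prop :=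
  cl_prop : is_poset le /\ (forall S, exists u, lub le S u) /\ (forall x y, exists m, is_meet le x y m).

Class FD {T : Type} (le : T -> T -> Prop) : Prop :=
  fd_prop : forall x S s m, lub le S s -> is_meet le x s m ->
     lub le (fun y => exists t, S t /\ is_meet le x t y) m.

Section CLth.
Context {T : Type} {le : T -> T -> Prop} {C : CL le}.

Lemma le_refl x : le x x. Proof. destruct C as [[A _] _]; auto. Qed.
Lemma le_trans x y z : le x y -> le y z -> le x z. Proof. destruct C as [[_ [A _]] _]; eauto. Qed.
Lemma le_anti x y : le x y -> le y x -> x = y. Proof. destruct C as [[_ [_ A]] _]; eauto. Qed.
Lemma cl_po : is_poset le. Proof. destruct C; auto. Qed.

Definition sup (S : T -> Prop) : T :=
  proj1_sig (constructive_indefinite_description _ (proj1 (proj2 C) S)).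
Lemma sup_spec S : lub le S (sup S).
Proof. unfold sup; destruct constructive_indefinite_description; auto. Qed.
Lemma sup_ub S x : S x -> le x (sup S). Proof. intros; apply (proj1 (sup_spec S)); auto. Qed.
Lemma sup_least S v : (forall x, S x -> le x v) -> le (sup S) v.
Proof. intros; apply (proj2 (sup_spec S)); auto. Qed.
Lemma lub_eq S u : lub le S u -> u = sup S.
Proof. intros; eapply lub_uniq_po; [apply cl_po | eassumption | apply sup_spec]. Qed.
Lemma sup_mono (S S' : T -> Prop) : (forall x, S x -> S' x) -> le (sup S) (sup S').
Proof. intros; apply sup_least; intros; apply sup_ub; auto. Qed.
Lemma sup_le_iff S v : le (sup S) v <-> forall x, S x -> le x v.
Proof. split; intros. eapply le_trans; [apply sup_ub; eauto| auto]. apply sup_least; auto. Qed.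

Definition meet (x y : T) : T :=
  proj1_sig (constructive_indefinite_description _ (proj2 (proj2 C) x y)).
Lemma meet_spec x y : is_meet le x y (meet x y).
Proof. unfold meet; destruct constructive_indefinite_description; auto. Qed.
Lemma meet_l x y : le (meet x y) x. Proof. apply (proj1 (meet_spec x y)); left; auto. Qed.
Lemma meet_r x y : le (meet x y) y. Proof. apply (proj1 (meet_spec x y)); right; auto. Qed.
Lemma meet_glb x y z : le z x -> le z y -> le z (meet x y).
Proof. intros; apply (proj2 (meet_spec x y)); intros w [-> | ->]; auto. Qed.
Lemma le_meet_iff x y z : le z (meet x y) <-> le z x /\ le z y.
Proof. split. intros; split; eapply le_trans; eauto using meet_l, meet_r. intros [? ?]; apply meet_glb; auto. Qed.
Lemma is_meet_eq x y m : is_meet le x y m -> m = meet x y.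
Proof. intros; eapply glb_uniq_po; [apply cl_po | eassumption | apply meet_spec]. Qed.

Definition join (x y : T) : T := sup (pair x y).
Lemma join_spec x y : is_join le x y (join x y). Proof. apply sup_spec. Qed.
Lemma join_l x y : le x (join x y). Proof. unfold join; apply sup_ub; left; auto. Qed.
Lemma join_r x y : le y (join x y). Proof. unfold join; apply sup_ub; right; auto. Qed.
Lemma join_lub x y z : le x z -> le y z -> le (join x y) z.
Proof. intros; unfold join; apply sup_least; intros w [-> | ->]; auto. Qed.
Lemma le_join_iff x y z : le (join x y) z <-> le x z /\ le y z.
Proof. split. intros; split; [eapply le_trans; [apply join_l|eauto] | eapply le_trans; [apply join_r|eauto]]. intros [? ?]; apply join_lub; auto. Qed.
Lemma is_join_eq x y j : is_join le x y j -> j = join x y.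
Proof. apply lub_eq. Qed.

Definition bot : T := sup (fun _ => False).
Definition top : T := sup (fun _ => True).
Lemma bot_le x : le bot x. Proof. apply sup_least; intros _ []. Qed.
Lemma le_top x : le x top. Proof. apply sup_ub; auto. Qed.
Lemma is_bot_bot : is_bot le bot. Proof. intro; apply bot_le. Qed.
Lemma is_top_top : is_top le top. Proof. intro; apply le_top. Qed.
Lemma is_bot_eq b : is_bot le b -> b = bot. Proof. intros H; apply le_anti; auto using bot_le. Qed.
Lemma is_top_eq t : is_top le t -> t = top. Proof. intros H; apply le_anti; auto using le_top. Qed.
Lemma le_bot_eq x : le x bot -> x = bot. Proof. intros; apply le_anti; auto using bot_le. Qed.
Lemma top_le_eq x : le top x -> x = top. Proof. intros; apply le_anti; auto using le_top. Qed.

Definition inf (S : T -> Prop) : T := sup (lower le S).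
Lemma inf_spec S : glb le S (inf S).
Proof. split.
  - intros x Sx. apply sup_least. intros y Hy; auto.
  - intros v Hv. apply sup_ub; auto.
Qed.
Lemma inf_lb S x : S x -> le (inf S) x. Proof. intros; apply (proj1 (inf_spec S)); auto. Qed.
Lemma inf_greatest S v : (forall x, S x -> le v x) -> le v (inf S).
Proof. intros; apply (proj2 (inf_spec S)); auto. Qed.
Lemma glb_eq S u : glb le S u -> u = inf S.
Proof. intros; eapply glb_uniq_po; [apply cl_po | eassumption | apply inf_spec]. Qed.

Ltac anti := apply le_anti.

Lemma meet_comm x y : meet x y = meet y x.
Proof. anti; apply meet_glb; auto using meet_l, meet_r. Qed.
Lemma join_comm x y : join x y = join y x.
Proof. anti; apply join_lub; auto using join_l, join_r. Qed.
Lemma meet_assoc x y z : meet x (meet y z) = meet (meet x y) z.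
Proof. anti; repeat rewrite le_meet_iff; repeat split;
  eauto using le_trans, meet_l, meet_r. Qed.
Lemma join_assoc x y z : join x (join y z) = join (join x y) z.
Proof. anti; repeat rewrite le_join_iff; repeat split;
  eauto using le_trans, join_l, join_r. Qed.
Lemma meet_eq_l x y : le x y -> meet x y = x.
Proof. intros; anti; auto using meet_l, meet_glb, le_refl. Qed.
Lemma meet_eq_r x y : le y x -> meet x y = y.
Proof. intros; anti; auto using meet_r, meet_glb, le_refl. Qed.
Lemma join_eq_r x y : le x y -> join x y = y.
Proof. intros; anti; auto using join_r, join_lub, le_refl. Qed.
Lemma join_eq_l x y : le y x -> join x y = x.
Proof. intros; anti; auto using join_l, join_lub, le_refl. Qed.
Lemma meet_idem x : meet x x = x. Proof. apply meet_eq_l, le_refl. Qed.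
Lemma join_idem x : join x x = x. Proof. apply join_eq_l, le_refl. Qed.
Lemma meet_mono x x' y y' : le x x' -> le y y' -> le (meet x y) (meet x' y').
Proof. intros; apply meet_glb; eauto using le_trans, meet_l, meet_r. Qed.
Lemma join_mono x x' y y' : le x x' -> le y y' -> le (join x y) (join x' y').
Proof. intros; apply join_lub; eauto using le_trans, join_l, join_r. Qed.
Lemma meet_bot x : meet x bot = bot. Proof. apply meet_eq_r, bot_le. Qed.
Lemma bot_meet x : meet bot x = bot. Proof. apply meet_eq_l, bot_le. Qed.
Lemma meet_top x : meet x top = x. Proof. apply meet_eq_l, le_top. Qed.
Lemma top_meet x : meet top x = x. Proof. apply meet_eq_r, le_top. Qed.
Lemma join_bot x : join x bot = x. Proof. apply join_eq_l, bot_le. Qed.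
Lemma bot_join x : join bot x = x. Proof. apply join_eq_r, bot_le. Qed.
Lemma join_top x : join x top = top. Proof. apply join_eq_r, le_top. Qed.
Lemma top_join x : join top x = top. Proof. apply join_eq_l, le_top. Qed.
Lemma meet_absorb x y : meet x (join x y) = x. Proof. apply meet_eq_l, join_l. Qed.
Lemma join_absorb x y : join x (meet x y) = x. Proof. apply join_eq_l, meet_l. Qed.

Lemma sup_nil : sup (fun x => In x nil) = bot.
Proof. unfold bot; f_equal; apply set_ext; simpl; tauto. Qed.
Lemma sup_cons x l : sup (fun z => In z (x :: l)) = join x (sup (fun z => In z l)).
Proof. anti.
  - apply sup_least. intros z [<- | H]. apply join_l.
    eapply le_trans; [apply (sup_ub (fun z => In z l)); exact H| apply join_r].
  - apply join_lub. apply (sup_ub (fun z => In z (x::l))); left; auto. apply sup_mono; intros; right; auto.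
Qed.
Lemma sup_image_pair (f : T -> T) x y : sup (image f (pair x y)) = join (f x) (f y).
Proof. unfold join; f_equal; apply set_ext; intros z; unfold image, pair; split.
  intros [w [[-> | ->] ->]]; auto. intros [-> | ->]; eauto. Qed.

Lemma compact_iff a : compact le a <->
  forall S, le a (sup S) -> exists l, (forall x, In x l -> S x) /\ le a (sup (fun x => In x l)).
Proof. split.
  - intros H S Ha. destruct (H S (sup S) (sup_spec S) Ha) as [l [Hl [v [Hv Hav]]]].
    exists l; split; auto. rewrite <- (lub_eq _ _ Hv); auto.
  - intros H S u Hu Ha. rewrite (lub_eq _ _ Hu) in Ha. destruct (H S Ha) as [l [Hl Hal]].
    exists l; split; auto. exists (sup (fun x => In x l)); split; auto using sup_spec.
Qed.

End CLth.
Arguments sup {T} le {C} S.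
Arguments meet {T} le {C} x y.
Arguments join {T} le {C} x y.
Arguments bot {T} le {C}.
Arguments top {T} le {C}.
Arguments inf {T} le {C} S.


Section Fr.
Context {T : Type} {le : T -> T -> Prop} {C : CL le} {D : FD le}.
Ltac anti := apply le_anti.

Lemma distr_sup x S : meet le x (sup le S) = sup le (fun y => exists t, S t /\ y = meet le x t).
Proof.
  pose proof (D x S (sup le S) (meet le x (sup le S)) (sup_spec S) (meet_spec _ _)) as H.
  apply lub_eq. replace (fun y => exists t, S t /\ y = meet le x t) with
   (fun y => exists t, S t /\ is_meet le x t y); auto.
  apply set_ext; intros y; split; intros [t [St Ht]]; exists t; split; auto.
  apply is_meet_eq; auto. subst; apply meet_spec.
Qed.

Lemma distr x y z : meet le x (join le y z) = join le (meet le x y) (meet le x z).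
Proof. unfold join at 1. rewrite distr_sup. unfold join. f_equal. apply set_ext; intros w.
  unfold pair; split. intros [t [[-> | ->] ->]]; auto. intros [-> | ->]; eauto. Qed.

Lemma distr_r x y z : meet le (join le y z) x = join le (meet le y x) (meet le z x).
Proof. rewrite meet_comm, distr, (meet_comm x y), (meet_comm x z); auto. Qed.

Lemma jdistr x y z : join le x (meet le y z) = meet le (join le x y) (join le x z).
Proof. rewrite (distr (join le x y)), (meet_comm _ x), meet_absorb, distr_r, join_assoc.
  rewrite (join_eq_l x (meet le x z)) by apply meet_l. auto. Qed.

Definition imp x y := sup le (fun w => le (meet le w x) y).
Lemma imp_spec w x y : le w (imp x y) <-> le (meet le w x) y.
Proof. split; intros H.
  - eapply le_trans. apply meet_mono; [exact H | apply le_refl].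
    rewrite meet_comm; unfold imp; rewrite distr_sup. apply sup_least.
    intros z [t [Ht ->]]. rewrite meet_comm; auto.
  - apply sup_ub; auto.
Qed.
Lemma is_imp_eq x y i : is_imp le x y i -> i = imp x y.
Proof. intros H; apply lub_eq. unfold is_imp in H.
  replace (fun w => le (meet le w x) y) with (fun w => forall m, is_meet le w x m -> le m y); auto.
  apply set_ext; intros w; split; intros Hw. apply Hw, meet_spec.
  intros m Hm; rewrite (is_meet_eq _ _ _ Hm); auto. Qed.
Lemma is_imp_imp x y : is_imp le x y (imp x y).
Proof. unfold is_imp.
  replace (fun w => forall m, is_meet le w x m -> le m y) with (fun w => le (meet le w x) y).
  apply sup_spec.
  apply set_ext; intros w; split; intros Hw. intros m Hm; rewrite (is_meet_eq _ _ _ Hm); auto.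
  apply Hw, meet_spec. Qed.

Definition neg x := imp x (bot le).
Lemma neg_spec w x : le w (neg x) <-> meet le w x = bot le.
Proof. unfold neg; rewrite imp_spec; split; intros. apply le_bot_eq; auto. rewrite H; apply le_refl. Qed.
Lemma is_neg_eq x n : is_neg le x n -> n = neg x.
Proof. intros H; apply is_imp_eq, H, is_bot_bot. Qed.
Lemma is_neg_neg x : is_neg le x (neg x).
Proof. intros b Hb; rewrite (is_bot_eq _ Hb); apply is_imp_imp. Qed.
Lemma meet_neg_l x : meet le (neg x) x = bot le.
Proof. apply neg_spec, le_refl. Qed.
Lemma meet_neg_r x : meet le x (neg x) = bot le.
Proof. rewrite meet_comm; apply meet_neg_l. Qed.
Lemma neg_anti x y : le x y -> le (neg y) (neg x).
Proof. intros H; apply neg_spec. apply le_bot_eq. eapply le_trans.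
  apply meet_mono; [apply le_refl | exact H]. rewrite meet_neg_l; apply le_refl. Qed.
Lemma le_nn x : le x (neg (neg x)).
Proof. apply neg_spec, meet_neg_r. Qed.
Lemma nnn x : neg (neg (neg x)) = neg x.
Proof. anti. apply neg_anti, le_nn. apply le_nn. Qed.
Lemma neg_join x y : neg (join le x y) = meet le (neg x) (neg y).
Proof. anti.
  - apply meet_glb; apply neg_anti; [apply join_l | apply join_r].
  - apply neg_spec. rewrite distr. apply le_bot_eq. apply join_lub.
    eapply le_trans. apply meet_mono; [apply meet_l | apply le_refl]. rewrite meet_neg_l; apply le_refl.
    eapply le_trans. apply meet_mono; [apply meet_r | apply le_refl]. rewrite meet_neg_l; apply le_refl.
Qed.
Lemma neg_bot : neg (bot le) = top le.
Proof. apply top_le_eq, neg_spec, meet_bot. Qed.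
Lemma neg_top : neg (top le) = bot le.
Proof. rewrite <- (meet_top (neg (top le))). apply meet_neg_l. Qed.
Lemma compl_uniq x c : meet le x c = bot le -> join le x c = top le -> c = neg x.
Proof. intros H1 H2. anti.
  - apply neg_spec; rewrite meet_comm; auto.
  - rewrite <- (meet_top (neg x)), <- H2, distr, meet_neg_l, bot_join. apply meet_r.
Qed.

Definition compl x := join le x (neg x) = top le.
Lemma compl_nn x : compl x -> neg (neg x) = x.
Proof. intros H; symmetry; apply compl_uniq. apply meet_neg_l. rewrite join_comm; auto. Qed.
Lemma compl_neg x : compl x -> compl (neg x).
Proof. intros H; unfold compl. rewrite compl_nn by auto. rewrite join_comm; auto. Qed.
Lemma meet_neg_le a x : le a x -> meet le a (neg x) = bot le.
Proof. intros H; apply le_bot_eq. eapply le_trans. apply meet_mono; [exact H | apply le_refl].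
  rewrite meet_neg_r; apply le_refl. Qed.
Lemma top_le_join1 x b : compl x -> le (neg x) b -> le (top le) (join le b x).
Proof. intros Hx H. unfold compl in Hx. rewrite <- Hx, (join_comm x). apply join_mono; [exact H | apply le_refl]. Qed.
Lemma top_le_join2 x b : compl x -> le x b -> le (top le) (join le b (neg x)).
Proof. intros Hx H. unfold compl in Hx. rewrite <- Hx. apply join_mono; [exact H | apply le_refl]. Qed.
Lemma compl_meet x y : compl x -> compl y -> compl (meet le x y).
Proof. intros Hx Hy.
  assert (E : join le (neg x) (neg y) = neg (meet le x y)).
  { apply compl_uniq.
    - rewrite distr, meet_neg_le, meet_neg_le by (apply meet_l || apply meet_r). apply join_idem.
    - rewrite join_comm, jdistr. apply top_le_eq. apply meet_glb.
      apply top_le_join1; auto. apply join_l. apply top_le_join1; auto. apply join_r. }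
  unfold compl; rewrite <- E.
  rewrite join_comm, jdistr. apply top_le_eq. apply meet_glb.
  apply top_le_join1; auto. apply join_l. apply top_le_join1; auto. apply join_r.
Qed.
Lemma compl_join x y : compl x -> compl y -> compl (join le x y).
Proof. intros Hx Hy. unfold compl. rewrite neg_join, jdistr. apply top_le_eq. apply meet_glb.
  apply top_le_join2; auto. apply join_l. apply top_le_join2; auto. apply join_r.
Qed.
Lemma compl_bot : compl (bot le).
Proof. unfold compl; rewrite neg_bot; apply join_top. Qed.
Lemma compl_top : compl (top le).
Proof. unfold compl; apply join_eq_l, le_top. Qed.
Lemma join_neg_le x y : join le (neg x) y = top le -> le x y.
Proof. intros H. rewrite <- (meet_top x), <- H, distr, meet_neg_r, bot_join. apply meet_r. Qed.

Lemma regular_set y : (fun x => exists n, is_neg le x n /\ forall t, is_top le t -> is_join le n y t)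
   = (fun x => join le (neg x) y = top le).
Proof. apply set_ext; intros x; split.
  - intros [n [Hn Ht]]. rewrite <- (is_neg_eq _ _ Hn). symmetry; apply is_join_eq, Ht, is_top_top.
  - intros H. exists (neg x); split. apply is_neg_neg. intros t Ht. rewrite (is_top_eq _ Ht), <- H.
    apply join_spec.
Qed.
Lemma regular_eq : regular le -> forall y, y = sup le (fun x => join le (neg x) y = top le).
Proof. intros H y. rewrite <- regular_set. apply lub_eq, H. Qed.
Lemma regular_intro : (forall y, le y (sup le (fun x => join le (neg x) y = top le))) -> regular le.
Proof. intros H y. rewrite regular_set. split.
  - intros x Hx; apply join_neg_le; auto.
  - intros v Hv. eapply le_trans. apply H. apply sup_least; auto.
Qed.
Lemma ED_eq : extremally_disconnected le -> forall x, compl (neg x).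
Proof. intros H x. unfold compl. symmetry; apply is_join_eq, (H x); auto using is_neg_neg, is_top_top. Qed.
Lemma ED_intro : (forall x, compl (neg x)) -> extremally_disconnected le.
Proof. intros H x n nn t Hn Hnn Ht. rewrite (is_neg_eq _ _ Hn) in *. rewrite (is_neg_eq _ _ Hnn).
  rewrite (is_top_eq _ Ht), <- (H x). apply join_spec. Qed.
Lemma coherent_intro : (forall a b, compact le a -> compact le b -> compact le (meet le a b)) ->
  compact le (top le) -> (forall x, le x (sup le (fun c => compact le c /\ le c x))) -> coherent le.
Proof. intros H1 H2 H3. split; [|split].
  - intros a b m Ha Hb Hm. rewrite (is_meet_eq _ _ _ Hm); auto.
  - intros t Ht; rewrite (is_top_eq _ Ht); auto.
  - intros x. split. intros c [_ Hc]; auto. intros v Hv. eapply le_trans; [apply H3|]. apply sup_least; auto.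
Qed.
Lemma coh_meet : coherent le -> forall a b, compact le a -> compact le b -> compact le (meet le a b).
Proof. intros [H _] a b Ha Hb. eapply H; [exact Ha | exact Hb | apply meet_spec]. Qed.
Lemma coh_top : coherent le -> compact le (top le).
Proof. intros [_ [H _]]. apply H, is_top_top. Qed.
Lemma coh_eq : coherent le -> forall x, x = sup le (fun c => compact le c /\ le c x).
Proof. intros [_ [_ H]] x. apply lub_eq, H. Qed.

Lemma sup_list_neg_top (R : T -> Prop) a l : (forall x, In x l -> join le (neg x) a = top le) ->
   join le (neg (sup le (fun z => In z l))) a = top le.
Proof. induction l as [|x l IH]; intros H.
  - rewrite sup_nil, neg_bot. apply top_join.
  - rewrite sup_cons, neg_join, join_comm, jdistr, (join_comm a), (join_comm a), H, IH.
    apply meet_top. intros; apply H; right; auto. left; auto.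
Qed.
Lemma compact_compl : regular le -> forall a, compact le a -> compl a.
Proof. intros Hr a Ha. pose proof (regular_eq Hr a) as E.
  rewrite compact_iff in Ha.
  assert (Ha' : le a (sup le (fun x => join le (neg x) a = top le))) by (rewrite <- E; apply le_refl).
  destruct (Ha _ Ha') as [l [Hl Hal]].
  pose proof (sup_list_neg_top (fun _ => True) a l Hl) as H.
  unfold compl. apply top_le_eq. eapply le_trans; [rewrite <- H; apply le_refl|].
  apply join_lub. eapply le_trans; [apply neg_anti; exact Hal | apply join_r]. apply join_l.
Qed.
Lemma compl_compact : compact le (top le) -> forall a, compl a -> compact le a.
Proof. intros Ht a Ha. rewrite compact_iff in *. intros S HS.
  set (S' := fun x => S x \/ x = neg a).
  assert (Htop : le (top le) (sup le S')).
  { rewrite <- Ha. apply join_lub. eapply le_trans; [exact HS|]. apply sup_mono; unfold S'; auto.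
    apply sup_ub; unfold S'; auto. }
  destruct (Ht S' Htop) as [l [Hl Hle]].
  assert (K : forall l, (forall x, In x l -> S' x) -> exists l', (forall x, In x l' -> S x) /\
              le (sup le (fun x => In x l)) (join le (sup le (fun x => In x l')) (neg a))).
  { clear. induction l as [|x l IH]; intros H.
    - exists nil; split. intros _ []. rewrite sup_nil; apply bot_le.
    - destruct IH as [l' [H1 H2]]. intros; apply H; right; auto.
      destruct (H x (or_introl eq_refl)) as [Sx | ->].
      + exists (x :: l'); split. intros z [<- | Hz]; auto.
        rewrite !sup_cons, <- join_assoc. apply join_mono; [apply le_refl | exact H2].
      + exists l'; split; auto. rewrite sup_cons. apply join_lub; [apply join_r | exact H2]. }
  destruct (K l Hl) as [l' [H1 H2]]. exists l'; split; auto.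
  rewrite <- (meet_top a). eapply le_trans. apply meet_mono. apply le_refl. eapply le_trans; [exact Hle| exact H2].
  rewrite distr, meet_neg_r, join_bot. apply meet_r.
Qed.

End Fr.
Arguments neg {T} le {C} _.
Arguments imp {T} le {C} _ _.
Arguments compl {T} le {C} _.


Lemma frame_CL {T} {le : T -> T -> Prop} : is_frame le -> CL le.
Proof. intros [? [? [? ?]]]; split; auto. Qed.
Lemma frame_FD {T} {le : T -> T -> Prop} : is_frame le -> FD le.
Proof. intros [? [? [? ?]]]; auto. Qed.
Lemma mk_frame {T} {le : T -> T -> Prop} : CL le -> FD le -> is_frame le.
Proof. intros [? [? ?]] ?; split; [|split; [|split]]; auto. Qed.
Lemma cba_CL {T} {le : T -> T -> Prop} : is_cba le -> CL le.
Proof. intros [? [? [? ?]]]; split; auto. Qed.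

Section CBA.
Context {T : Type} {le : T -> T -> Prop} (HA : is_cba le).
Let C : CL le := cba_CL HA.
Existing Instance C.

Lemma cba_bdistr x y z : meet le x (join le y z) = join le (meet le x y) (meet le x z).
Proof. pose proof HA as HA0; destruct HA0 as [_ [_ [_ [H _]]]]. eapply H; (apply join_spec || apply meet_spec). Qed.
Lemma cba_compl x : exists c, meet le x c = bot le /\ join le x c = top le.
Proof. pose proof HA as HA0; destruct HA0 as [_ [_ [_ [_ H]]]]. destruct (H x) as [c [H1 H2]]. exists c; split.
  symmetry; apply is_meet_eq, H2, is_bot_bot. symmetry; apply is_join_eq, H1, is_top_top. Qed.

Lemma cba_FD : FD le.
Proof. intros x S s m Hs Hm.
  rewrite (lub_eq _ _ Hs) in *. rewrite (is_meet_eq _ _ _ Hm) in *. clear Hs Hm m s.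
  replace (fun y => exists t, S t /\ is_meet le x t y) with (fun y => exists t, S t /\ y = meet le x t).
  2:{ apply set_ext; intros y; split; intros [t [? ?]]; exists t; split; auto.
      subst; apply meet_spec. apply is_meet_eq; auto. }
  set (u := sup le (fun y => exists t, S t /\ y = meet le x t)).
  replace (meet le x (sup le S)) with u. apply sup_spec.
  destruct (cba_compl x) as [c [H1 H2]].
  apply le_anti.
  - apply sup_least. intros y [t [St ->]]. apply meet_mono. apply le_refl. apply sup_ub; auto.
  - assert (K : le (sup le S) (join le u c)).
    { apply sup_least. intros t St. rewrite <- (meet_top t), <- H2, cba_bdistr, (meet_comm t x).
      apply join_mono. apply sup_ub; exists t; split; auto. apply meet_r. }
    eapply le_trans. apply meet_mono; [apply le_refl| exact K].
    rewrite cba_bdistr, H1, join_bot. apply meet_r.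
Qed.
Let D : FD le := cba_FD.
Existing Instance D.
Lemma cba_frame : is_frame le.
Proof. apply mk_frame; auto. Qed.
Lemma cba_bool x : compl le x.
Proof. destruct (cba_compl x) as [c [H1 H2]]. unfold compl. rewrite <- (compl_uniq x c); auto. Qed.
End CBA.


Lemma lub_iff_po {T} (le : T -> T -> Prop) S e u : is_poset le -> lub le S e -> (lub le S u <-> u = e).
Proof. intros P H; split. intros; eapply lub_uniq_po; eauto. intros ->; auto. Qed.
Lemma glb_iff_po {T} (le : T -> T -> Prop) S e u : is_poset le -> glb le S e -> (glb le S u <-> u = e).
Proof. intros P H; split. intros; eapply glb_uniq_po; eauto. intros ->; auto. Qed.

Lemma copen_eq {T} (le : T -> T -> Prop) (x y : copen_t le) : proj1_sig x = proj1_sig y -> x = y.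
Proof. destruct x, y; simpl; intros ->; f_equal; apply proof_irrelevance. Qed.
Lemma copen_po {T} (le : T -> T -> Prop) : is_poset le -> is_poset (copen_le le).
Proof. intros [A [B E]]; unfold copen_le; split; [|split]; eauto.
  intros; apply copen_eq; auto. Qed.

Set Default Proof Using "All".
Section COpen.
Context {T : Type} {le : T -> T -> Prop} {C : CL le} {D : FD le}
  (Hcoh : coherent le) (Hreg : regular le) (HED : extremally_disconnected le).

Lemma compact_iff_compl a : compact le a <-> compl le a.
Proof. split. apply compact_compl; auto. apply compl_compact, coh_top; auto. Qed.
Lemma compact_neg y : compact le (neg le y).
Proof. apply compact_iff_compl, ED_eq; auto. Qed.
Lemma compact_bot : compact le (bot le).
Proof. apply compact_iff_compl, compl_bot. Qed.
Lemma compact_top : compact le (top le).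
Proof. apply coh_top; auto. Qed.
Lemma compact_join a b : compact le a -> compact le b -> compact le (join le a b).
Proof. rewrite !compact_iff_compl; apply compl_join. Qed.
Lemma compact_meet a b : compact le a -> compact le b -> compact le (meet le a b).
Proof. apply coh_meet; auto. Qed.
Lemma compact_nn a : compact le a -> neg le (neg le a) = a.
Proof. intros; apply compl_nn, compact_iff_compl; auto. Qed.

Definition cbot : copen_t le := exist _ (bot le) compact_bot.
Definition ctop : copen_t le := exist _ (top le) compact_top.
Definition cjoin (x y : copen_t le) : copen_t le :=
  exist _ (join le (proj1_sig x) (proj1_sig y)) (compact_join _ _ (proj2_sig x) (proj2_sig y)).
Definition cmeet (x y : copen_t le) : copen_t le :=
  exist _ (meet le (proj1_sig x) (proj1_sig y)) (compact_meet _ _ (proj2_sig x) (proj2_sig y)).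
Definition cneg (x : copen_t le) : copen_t le := exist _ (neg le (proj1_sig x)) (compact_neg _).
Definition csup (S : copen_t le -> Prop) : copen_t le :=
  exist _ (neg le (neg le (sup le (image (@proj1_sig _ _) S)))) (compact_neg _).

Lemma cpo : is_poset (copen_le le). Proof. apply copen_po, cl_po. Qed.

Lemma csup_spec S : lub (copen_le le) S (csup S).
Proof. split.
  - intros x Sx. unfold copen_le; simpl. eapply le_trans; [|apply le_nn].
    apply sup_ub. exists x; auto.
  - intros v Hv. unfold copen_le; simpl. rewrite <- (compact_nn (proj1_sig v) (proj2_sig v)).
    apply neg_anti, neg_anti. apply sup_least. intros y [x [Sx ->]]. apply Hv; auto.
Qed.
Lemma cop_lub S u : lub (copen_le le) S u <-> proj1_sig u = neg le (neg le (sup le (image (@proj1_sig _ _) S))).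
Proof. rewrite (lub_iff_po _ _ _ _ cpo (csup_spec S)). split. intros ->; auto. intros; apply copen_eq; auto. Qed.
Lemma cjoin_spec x y : is_join (copen_le le) x y (cjoin x y).
Proof. split. intros z [-> | ->]; unfold copen_le; simpl. apply join_l. apply join_r.
  intros v Hv; unfold copen_le; simpl. apply join_lub; apply Hv; [left|right]; auto. Qed.
Lemma cop_join x y j : is_join (copen_le le) x y j <-> proj1_sig j = join le (proj1_sig x) (proj1_sig y).
Proof. unfold is_join; rewrite (lub_iff_po _ _ _ _ cpo (cjoin_spec x y)). split. intros ->; auto. intros; apply copen_eq; auto. Qed.
Lemma cmeet_spec x y : is_meet (copen_le le) x y (cmeet x y).
Proof. split. intros z [-> | ->]; unfold copen_le; simpl. apply meet_l. apply meet_r.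
  intros v Hv; unfold copen_le; simpl. apply meet_glb; apply Hv; [left|right]; auto. Qed.
Lemma cop_meet x y m : is_meet (copen_le le) x y m <-> proj1_sig m = meet le (proj1_sig x) (proj1_sig y).
Proof. unfold is_meet; rewrite (glb_iff_po _ _ _ _ cpo (cmeet_spec x y)). split. intros ->; auto. intros; apply copen_eq; auto. Qed.
Lemma cop_top t : is_top (copen_le le) t <-> proj1_sig t = top le.
Proof. split. intros H. apply top_le_eq, (H ctop). intros E x; unfold copen_le; rewrite E; apply le_top. Qed.
Lemma cop_bot b : is_bot (copen_le le) b <-> proj1_sig b = bot le.
Proof. split. intros H. apply le_bot_eq, (H cbot). intros E x; unfold copen_le; rewrite E; apply bot_le. Qed.

Lemma copen_cba : is_cba (copen_le le).
Proof. split; [apply cpo|split; [|split; [|split]]].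
  - intros S; exists (csup S); apply csup_spec.
  - intros x y; exists (cmeet x y); apply cmeet_spec.
  - intros x y z j m a b r Hj Hm Ha Hb Hr. apply copen_eq.
    rewrite cop_join in Hj, Hr. rewrite cop_meet in Hm, Ha, Hb.
    rewrite Hm, Hr, Hj, Ha, Hb. apply distr.
  - intros x. exists (cneg x). split.
    + intros t Ht. rewrite cop_top in Ht. apply cop_join. rewrite Ht; simpl.
      symmetry; apply compact_iff_compl, proj2_sig.
    + intros b Hb. rewrite cop_bot in Hb. apply cop_meet. rewrite Hb; simpl.
      symmetry; apply meet_neg_r.
Qed.
End COpen.


Lemma part1 : forall (T : Type) (le : T -> T -> Prop),
     hyperstonean le -> localizable (copen_le le).
Proof.
  intros T le [[HF [Hcoh [Hreg HED]]] Hval].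
  assert (C : CL le) by (apply frame_CL; auto).
  assert (D : FD le) by (apply frame_FD; auto).
  split. apply copen_cba; auto.
  intros t Ht. rewrite (cop_top Hcoh Hreg HED) in Ht. split.
  { intros a _; unfold copen_le; rewrite Ht; apply le_top. }
  intros v Hv. unfold copen_le. rewrite Ht.
  apply NNPP; intro Hnot.
  set (w := neg le (proj1_sig v)).
  assert (Hw : ~ is_bot le w).
  { intros Hb. apply Hnot. apply is_bot_eq in Hb. unfold w in Hb.
    rewrite <- (compact_nn Hcoh Hreg HED _ (proj2_sig v)), Hb, neg_bot. apply le_refl. }
  destruct (Hval w Hw) as [nu [[Hnn [Hb0 [Hmod [Hmono Hcont]]]] [Hnorm Hnz]]].
  set (Z := fun x => nu x = 0).
  set (n := sup le Z).
  assert (HZd : directed le Z).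
  { split. exists (bot le). apply Hb0, is_bot_bot.
    intros a b Ha Hb. exists (join le a b). split; [|split; [apply join_l | apply join_r]].
    pose proof (Hmod a b _ _ (join_spec a b) (meet_spec a b)).
    pose proof (Hnn (join le a b)). pose proof (Hnn (meet le a b)). unfold Z in *. lra. }
  assert (Hn0 : nu n = 0).
  { destruct (Hcont Z n HZd (sup_spec Z)) as [_ H]. pose proof (Hnn n).
    assert (nu n <= 0). apply H. intros r [s [Zs ->]]. unfold Z in Zs; lra. lra. }
  assert (Hnnn : neg le (neg le n) = n).
  { apply le_anti; [|apply le_nn]. apply sup_ub. unfold Z.
    rewrite (Hnorm n (neg le n) (neg le (neg le n))); [exact Hn0 | apply is_neg_neg | apply is_neg_neg]. }
  assert (Hcn : compl le n).
  { rewrite <- Hnnn. apply ED_eq; auto. }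
  set (s := neg le n).
  assert (Hb : compact le (meet le w s)).
  { apply compact_meet; auto; apply compact_neg; auto. }
  set (cb := exist _ (meet le w s) Hb : copen_t le).
  set (mu := fun x : copen_t le => nu (proj1_sig x)).
  assert (Hf : faithful_cv_below (copen_le le) cb mu).
  { split; [|split; [|split; [|split; [|split]]]].
    - intros x _; apply Hnn.
    - intros b' Hb'. rewrite (cop_bot Hcoh Hreg HED) in Hb'. unfold mu; rewrite Hb'. apply Hb0, is_bot_bot.
    - intros x y j m _ _ Hj Hm. rewrite (cop_join Hcoh Hreg HED) in Hj. rewrite (cop_meet Hcoh Hreg HED) in Hm.
      unfold mu; rewrite Hj, Hm. apply Hmod. apply join_spec. apply meet_spec.
    - intros x y _ _ Hxy. apply Hmono, Hxy.
    - intros S u _ [[s0 Ss0] Hdir] Hu. rewrite (cop_lub Hcoh Hreg HED) in Hu. unfold mu. rewrite Hu.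
      set (X := image (@proj1_sig _ _) S).
      rewrite (Hnorm (sup le X) (neg le (sup le X)) _ (is_neg_neg _) (is_neg_neg _)).
      assert (HXd : directed le X).
      { split. exists (proj1_sig s0), s0; auto.
        intros a b [a' [Sa ->]] [b' [Sb ->]]. destruct (Hdir a' b' Sa Sb) as [c [Sc [H1 H2]]].
        exists (proj1_sig c); split; auto. exists c; auto. }
      pose proof (Hcont X (sup le X) HXd (sup_spec X)) as H.
      replace (fun r => exists s, S s /\ r = nu (proj1_sig s)) with (fun r => exists s, X s /\ r = nu s); auto.
      apply set_ext; intros r; split.
      + intros [s' [[x [Sx ->]] ->]]. exists x; auto.
      + intros [x [Sx ->]]. exists (proj1_sig x); split; auto. exists x; auto.
    - intros b' Hb' H0. rewrite (cop_bot Hcoh Hreg HED). apply le_bot_eq.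
      unfold copen_le in Hb'; simpl in Hb'.
      rewrite <- (meet_neg_r n). apply meet_glb. apply sup_ub. exact H0.
      eapply le_trans; [exact Hb'| apply meet_r]. }
  assert (Hbv : le (meet le w s) (proj1_sig v)) by (apply (Hv cb); exists mu; exact Hf).
  assert (Hb0' : meet le w s = bot le).
  { apply le_bot_eq. rewrite <- (meet_neg_r (proj1_sig v)). apply meet_glb. exact Hbv. apply meet_l. }
  apply Hnz.
  assert (Ew : w = join le (meet le w n) (meet le w s)).
  { rewrite <- distr. unfold s. rewrite Hcn. symmetry; apply meet_top. }
  pose proof (Hmod (meet le w n) (meet le w s) _ _ (join_spec _ _) (meet_spec _ _)) as H.
  rewrite <- Ew, Hb0' in H. rewrite (Hb0 (bot le) is_bot_bot) in H.
  pose proof (Hmono (meet le w n) n (meet_r _ _)).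
  pose proof (Hnn (meet le w n)). pose proof (Hnn w).
  pose proof (Hnn (meet le (meet le w n) (bot le))). lra.
Qed.


Lemma ideal_eq {T} (le : T -> T -> Prop) (I J : ideal_t le) :
  (forall x, proj1_sig I x <-> proj1_sig J x) -> I = J.
Proof. destruct I as [I HI], J as [J HJ]; simpl; intros H.
  assert (I = J) by (apply set_ext; auto). subst; f_equal; apply proof_irrelevance. Qed.

Lemma part3 : forall (T : Type) (le : T -> T -> Prop), hyperstonean le ->
     exists eta : ideal_t (copen_le le) -> T,
       (forall J, lub le (fun x => exists c, proj1_sig J c /\ x = proj1_sig c) (eta J)) /\
       order_iso (ideal_le (copen_le le)) le eta.
Proof.
  intros T le [[HF [Hcoh [Hreg HED]]] _].
  assert (C : CL le) by (apply frame_CL; auto).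
  assert (D : FD le) by (apply frame_FD; auto).
  exists (fun J => sup le (fun x => exists c, proj1_sig J c /\ x = proj1_sig c)).
  split. intros J; apply sup_spec.
  assert (Hord : forall J K : ideal_t (copen_le le), ideal_le (copen_le le) J K <->
     le (sup le (fun x => exists c, proj1_sig J c /\ x = proj1_sig c))
        (sup le (fun x => exists c, proj1_sig K c /\ x = proj1_sig c))).
  { intros J K. split.
    - intros H. apply sup_mono. intros x [c [Jc ->]]. exists c; auto.
    - intros H c Jc. destruct K as [K [Kd [Kb Kj]]]; simpl in *.
      assert (Hc : le (proj1_sig c) (sup le (fun x => exists c, K c /\ x = proj1_sig c))).
      { eapply le_trans; [|exact H]. apply sup_ub. exists c; auto. }
      pose proof (proj2_sig c) as Hcc. simpl in Hcc. rewrite compact_iff in Hcc.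
      destruct (Hcc _ Hc) as [l [Hl Hcl]].
      assert (L : forall l, (forall x, In x l -> exists c, K c /\ x = proj1_sig c) ->
                 exists k, K k /\ proj1_sig k = sup le (fun x => In x l)).
      { clear -C D Hcoh Hreg HED Kb Kj. induction l as [|x l IH]; intros Hl.
        - exists (cbot Hcoh Hreg HED). split. apply Kb. apply cop_bot; auto. simpl; rewrite sup_nil; auto.
        - destruct IH as [k [Kk Ek]]. intros; apply Hl; right; auto.
          destruct (Hl x (or_introl eq_refl)) as [c' [Kc' ->]].
          exists (cjoin Hcoh Hreg HED c' k). split. eapply Kj; [exact Kc' | exact Kk | apply cjoin_spec].
          rewrite sup_cons, <- Ek; reflexivity. }
      destruct (L l Hl) as [k [Kk Ek]]. apply (Kd c k); auto. unfold copen_le; rewrite Ek; auto. }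
  split; [|split].
  - intros y.
    assert (HI : is_ideal (copen_le le) (fun c : copen_t le => le (proj1_sig c) y)).
    { split; [|split].
      - intros a b Hab Hb. eapply le_trans; eauto.
      - intros b Hb. rewrite (cop_bot Hcoh Hreg HED) in Hb. rewrite Hb; apply bot_le.
      - intros a b j Ha Hb Hj. rewrite (cop_join Hcoh Hreg HED) in Hj. rewrite Hj. apply join_lub; auto. }
    exists (exist _ _ HI). simpl. transitivity (sup le (fun c => compact le c /\ le c y)); [f_equal | symmetry; apply coh_eq; auto].
    apply set_ext; intros x; split.
    + intros [c [Hc ->]]. split; auto. apply proj2_sig.
    + intros [Hx Hxy]. exists (exist _ x Hx); auto.
  - intros J K E. cbv beta in E. apply ideal_eq. intros x; split; intros Hx.
    apply (proj2 (Hord J K)); auto. exact (eq_ind _ (fun z => le _ z) (le_refl _) _ E).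
    apply (proj2 (Hord K J)); auto. exact (eq_ind _ (fun z => le z _) (le_refl _) _ E).
  - exact Hord.
Qed.


Lemma image_pair {A B} (f : A -> B) x y : image f (pair x y) = pair (f x) (f y).
Proof. apply set_ext; intros z; unfold image, pair; split.
  intros [w [[-> | ->] ->]]; auto. intros [-> | ->]; eauto. Qed.
Lemma image_empty {A B} (f : A -> B) : image f (fun _ => False) = (fun _ => False).
Proof. apply set_ext; intros z; unfold image; split. intros [w [[] _]]. intros []. Qed.

Set Default Proof Using "All".
Section FH.
Context {TK TH : Type} {leK : TK -> TK -> Prop} {leH : TH -> TH -> Prop}
  {CK : CL leK} {DK : FD leK} {CH : CL leH} {DH : FD leH}
  (f : TK -> TH) (Hf : frame_hom leK leH f).

Lemma f_sup S : f (sup leK S) = sup leH (image f S).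
Proof. apply lub_eq, Hf, sup_spec. Qed.
Lemma f_bot : f (bot leK) = bot leH.
Proof. unfold bot. rewrite f_sup, image_empty; auto. Qed.
Lemma f_join x y : f (join leK x y) = join leH (f x) (f y).
Proof. unfold join at 1. rewrite f_sup, image_pair; auto. Qed.
Lemma f_meet x y : f (meet leK x y) = meet leH (f x) (f y).
Proof. apply is_meet_eq, Hf, meet_spec. Qed.
Lemma f_top : f (top leK) = top leH.
Proof. apply is_top_eq, Hf, is_top_top. Qed.
Lemma f_mono x y : leK x y -> leH (f x) (f y).
Proof. intros H. rewrite <- (meet_eq_l x y H), f_meet. apply meet_r. Qed.
End FH.

Section OFH.
Context {TK TH : Type} {leK : TK -> TK -> Prop} {leH : TH -> TH -> Prop}
  {CK : CL leK} {DK : FD leK} {CH : CL leH} {DH : FD leH}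
  (f : TK -> TH) (Hf : open_frame_hom leK leH f).
Lemma f_neg x : f (neg leK x) = neg leH (f x).
Proof. destruct Hf as [Hf0 [_ Himp]].
  pose proof (Himp _ _ _ (is_imp_imp x (bot leK))) as H.
  rewrite (f_bot f Hf0) in H. apply is_imp_eq in H. exact H. Qed.
Lemma f_compl x : compl leK x -> compl leH (f x).
Proof. unfold compl; intros H. rewrite <- f_neg, <- (f_join f (proj1 Hf)), H. apply (f_top f (proj1 Hf)). Qed.
End OFH.

Lemma part5 : forall (TH TK : Type) (leH : TH -> TH -> Prop) (leK : TK -> TK -> Prop)
          (f : TK -> TH),
     hyperstonean leH -> hyperstonean leK -> open_frame_hom leK leH f ->
     exists g : copen_t leK -> copen_t leH,
       (forall c, proj1_sig (g c) = f (proj1_sig c)) /\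
       sup_bool_hom (copen_le leK) (copen_le leH) g.
Proof.
  intros TH TK leH leK f [[HFH [HcohH [HregH HEDH]]] _] [[HFK [HcohK [HregK HEDK]]] _] Hf.
  assert (CH : CL leH) by (apply frame_CL; auto).
  assert (DH : FD leH) by (apply frame_FD; auto).
  assert (CK : CL leK) by (apply frame_CL; auto).
  assert (DK : FD leK) by (apply frame_FD; auto).
  assert (Hfc : forall c : copen_t leK, compact leH (f (proj1_sig c))).
  { intros c. apply (compact_iff_compl HcohH HregH HEDH), (f_compl f Hf),
      (compact_iff_compl HcohK HregK HEDK), proj2_sig. }
  exists (fun c => exist _ (f (proj1_sig c)) (Hfc c)). split. intros; reflexivity.
  destruct Hf as [Hf0 [Hglb Himp]].
  split; [|split; [|split]].
  - intros S u Hu. rewrite (cop_lub HcohK HregK HEDK) in Hu. apply (cop_lub HcohH HregH HEDH). simpl.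
    rewrite Hu, !(f_neg f (conj Hf0 (conj Hglb Himp))), (f_sup f Hf0). do 3 f_equal.
    apply set_ext; intros y; split.
    + intros [x [[c [Sc ->]] ->]]. exists (exist _ (f (proj1_sig c)) (Hfc c)). split; auto. exists c; auto.
    + intros [x [[c [Sc ->]] ->]]. exists (proj1_sig c). split; auto. exists c; auto.
  - intros x y m Hm. rewrite (cop_meet HcohK HregK HEDK) in Hm. apply (cop_meet HcohH HregH HEDH). simpl.
    rewrite Hm. apply (f_meet f Hf0).
  - intros t Ht. rewrite (cop_top HcohK HregK HEDK) in Ht. apply (cop_top HcohH HregH HEDH). simpl.
    rewrite Ht. apply (f_top f Hf0).
  - intros x c H1 H2.
    pose proof (H1 (ctop HcohK HregK HEDK) (proj2 (cop_top HcohK HregK HEDK (ctop HcohK HregK HEDK)) eq_refl)) as J.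
    pose proof (H2 (cbot HcohK HregK HEDK) (proj2 (cop_bot HcohK HregK HEDK (cbot HcohK HregK HEDK)) eq_refl)) as M.
    rewrite (cop_join HcohK HregK HEDK) in J. rewrite (cop_meet HcohK HregK HEDK) in M. simpl in J, M.
    split.
    + intros t Ht. rewrite (cop_top HcohH HregH HEDH) in Ht. apply (cop_join HcohH HregH HEDH). simpl.
      rewrite Ht, <- (f_join f Hf0), <- J. symmetry; apply (f_top f Hf0).
    + intros b Hb. rewrite (cop_bot HcohH HregH HEDH) in Hb. apply (cop_meet HcohH HregH HEDH). simpl.
      rewrite Hb, <- (f_meet f Hf0), <- M. symmetry; apply (f_bot f Hf0).
Qed.

Lemma part7 : forall (TH TK : Type) (leH : TH -> TH -> Prop) (leK : TK -> TK -> Prop)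
          (f : TK -> TH),
     hyperstonean leH -> hyperstonean leK -> open_frame_hom leK leH f ->
     forall (J : ideal_t (copen_le leK)) (u : TK),
       lub leK (fun x => exists c, proj1_sig J c /\ x = proj1_sig c) u ->
       lub leH (fun x => exists c : copen_t leH,
                   (exists d, proj1_sig J d /\ leH (proj1_sig c) (f (proj1_sig d))) /\
                   x = proj1_sig c) (f u).
Proof.
  intros TH TK leH leK f [[HFH [HcohH [HregH HEDH]]] _] [[HFK [HcohK [HregK HEDK]]] _] Hf J u Hu.
  assert (CH : CL leH) by (apply frame_CL; auto).
  assert (DH : FD leH) by (apply frame_FD; auto).
  assert (CK : CL leK) by (apply frame_CL; auto).
  assert (DK : FD leK) by (apply frame_FD; auto).
  assert (Hfc : forall c : copen_t leK, compact leH (f (proj1_sig c))).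
  { intros c. apply (compact_iff_compl HcohH HregH HEDH), (f_compl f Hf),
      (compact_iff_compl HcohK HregK HEDK), proj2_sig. }
  rewrite (lub_eq _ _ Hu). rewrite (f_sup f (proj1 Hf)). split.
  - intros x [c [[d [Jd Hcd]] ->]]. eapply le_trans; [exact Hcd|].
    apply sup_ub. exists (proj1_sig d); split; auto. exists d; auto.
  - intros v Hv. apply sup_least. intros y [x [[d [Jd ->]] ->]].
    apply Hv. exists (exist _ (f (proj1_sig d)) (Hfc d)). split; auto.
    exists d; split; auto. apply le_refl.
Qed.


Set Default Proof Using "All".
Section Ideals.
Context {T : Type} {le : T -> T -> Prop} {C : CL le} {D : FD le}.

Lemma id_down (I : ideal_t le) x y : le x y -> proj1_sig I y -> proj1_sig I x.
Proof. destruct I as [I HI]; simpl; destruct HI as [H _]; eauto. Qed.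
Lemma id_bot (I : ideal_t le) : proj1_sig I (bot le).
Proof. destruct I as [I HI]; simpl; destruct HI as [_ [H _]]; apply H, is_bot_bot. Qed.
Lemma id_join (I : ideal_t le) x y : proj1_sig I x -> proj1_sig I y -> proj1_sig I (join le x y).
Proof. destruct I as [I HI]; simpl; destruct HI as [_ [_ H]]; intros Hx Hy; exact (H _ _ _ Hx Hy (join_spec x y)). Qed.
Lemma mk_ideal (I : T -> Prop) : (forall x y, le x y -> I y -> I x) -> I (bot le) ->
  (forall x y, I x -> I y -> I (join le x y)) -> is_ideal le I.
Proof. intros H1 H2 H3; split; [|split]; auto.
  intros b Hb; rewrite (is_bot_eq _ Hb); auto.
  intros x y j Hx Hy Hj; rewrite (is_join_eq _ _ _ Hj); auto. Qed.

Inductive Gen (S : ideal_t le -> Prop) : T -> Prop :=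
| Gen_in I x : S I -> proj1_sig I x -> Gen S x
| Gen_bot : Gen S (bot le)
| Gen_join x y : Gen S x -> Gen S y -> Gen S (join le x y)
| Gen_down x y : le x y -> Gen S y -> Gen S x.

Lemma Gen_ideal S : is_ideal le (Gen S).
Proof. apply mk_ideal. intros; eapply Gen_down; eauto. apply Gen_bot. intros; apply Gen_join; auto. Qed.
Definition igen S : ideal_t le := exist _ (Gen S) (Gen_ideal S).
Lemma Gen_least S (K : T -> Prop) : is_ideal le K -> (forall I x, S I -> proj1_sig I x -> K x) ->
  forall x, Gen S x -> K x.
Proof. intros HK H x G. pose (K' := exist _ K HK : ideal_t le).
  change (proj1_sig K' x). induction G.
  - simpl; eauto.
  - apply id_bot.
  - apply id_join; auto.
  - eapply id_down; eauto.
Qed.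
Lemma Gen_mono (S S' : ideal_t le -> Prop) x : (forall I, S I -> S' I) -> Gen S x -> Gen S' x.
Proof. intros H G; induction G. eapply Gen_in; eauto. apply Gen_bot. apply Gen_join; auto. eapply Gen_down; eauto. Qed.

Lemma ipo : is_poset (ideal_le le).
Proof. unfold ideal_le; split; [|split]; auto. intros; apply ideal_eq; split; auto. Qed.
Lemma igen_lub S : lub (ideal_le le) S (igen S).
Proof. split.
  - intros I SI x Ix. simpl. eapply Gen_in; eauto.
  - intros v Hv x Gx. simpl in Gx. apply (Gen_least S (proj1_sig v) (proj2_sig v)); auto.
    intros I y SI Iy. apply (Hv I SI); auto.
Qed.

Definition imeet (I J : ideal_t le) : ideal_t le.
Proof. refine (exist _ (fun x => proj1_sig I x /\ proj1_sig J x) _).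
  apply mk_ideal. intros x y H [H1 H2]; split; eapply id_down; eauto.
  split; apply id_bot. intros x y [H1 H2] [H3 H4]; split; apply id_join; auto. Defined.
Lemma imeet_spec I J : is_meet (ideal_le le) I J (imeet I J).
Proof. split. intros K [-> | ->] x [H1 H2]; auto.
  intros v Hv x Hx. split; apply (Hv _ (or_introl eq_refl) x Hx) || apply (Hv _ (or_intror eq_refl) x Hx). Qed.

Definition iInter (S : ideal_t le -> Prop) : ideal_t le.
Proof. refine (exist _ (fun x => forall I, S I -> proj1_sig I x) _).
  apply mk_ideal. intros x y H H1 I SI; eapply id_down; eauto.
  intros I _; apply id_bot. intros x y H1 H2 I SI; apply id_join; auto. Defined.
Lemma iInter_spec S : glb (ideal_le le) S (iInter S).
Proof. split. intros I SI x Hx; apply Hx; auto.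
  intros v Hv x Hx I SI. apply (Hv I SI); auto. Qed.

Definition pr (a : T) : ideal_t le.
Proof. refine (exist _ (fun x => le x a) _).
  apply mk_ideal. intros; eapply le_trans; eauto. apply bot_le. intros; apply join_lub; auto. Defined.

Definition iimp (I J : ideal_t le) : ideal_t le.
Proof. refine (exist _ (fun x => forall y, proj1_sig I y -> proj1_sig J (meet le x y)) _).
  apply mk_ideal.
  - intros x x' H H1 y Iy. eapply id_down; [|apply (H1 y Iy)]. apply meet_mono; [exact H | apply le_refl].
  - intros y _. rewrite bot_meet. apply id_bot.
  - intros x x' H1 H2 y Iy. rewrite distr_r. apply id_join; auto.
Defined.

Lemma ideal_CL : CL (ideal_le le).
Proof. split; [apply ipo | split].
  intros S; exists (igen S); apply igen_lub. intros I J; exists (imeet I J); apply imeet_spec. Qed.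
End Ideals.

Global Existing Instance ideal_CL.

Section Ideals2.
Context {T : Type} {le : T -> T -> Prop} {C : CL le} {D : FD le}.

Lemma isup_eq S : sup (ideal_le le) S = igen S.
Proof. symmetry; apply lub_eq, igen_lub. Qed.
Lemma imeet_eq I J : meet (ideal_le le) I J = imeet I J.
Proof. symmetry; apply is_meet_eq, imeet_spec. Qed.
Lemma ibot_eq : bot (ideal_le le) = pr (bot le).
Proof. symmetry; apply is_bot_eq. intros I x Hx. simpl in Hx. eapply id_down; [exact Hx| apply id_bot]. Qed.
Lemma itop_eq : top (ideal_le le) = pr (top le).
Proof. symmetry; apply is_top_eq. intros I x Hx. simpl. apply le_top. Qed.
Lemma iinf_eq S : inf (ideal_le le) S = iInter S.
Proof. symmetry; apply glb_eq, iInter_spec. Qed.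

Lemma ideal_FD : FD (ideal_le le).
Proof. intros I S s m Hs Hm. rewrite (lub_eq _ _ Hs) in Hm. rewrite (is_meet_eq _ _ _ Hm).
  rewrite isup_eq, imeet_eq.
  replace (fun y => exists t, S t /\ is_meet (ideal_le le) I t y) with (fun y => exists t, S t /\ y = imeet I t).
  2:{ apply set_ext; intros y; split; intros [t [? ?]]; exists t; split; auto.
      subst; apply imeet_spec. rewrite <- imeet_eq. apply is_meet_eq; auto. }
  assert (E : imeet I (igen S) = igen (fun y => exists t, S t /\ y = imeet I t)).
  { apply ideal_eq. intros x; simpl; split.
    - intros [Ix Gx]. 
      assert (K : forall z, Gen S z -> forall x, proj1_sig I x -> Gen (fun y => exists t, S t /\ y = imeet I t) (meet le x z)).
      { clear. intros z G; induction G; intros w Iw.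
        - eapply Gen_in. exists I0; split; eauto. simpl. split; auto.
          eapply id_down; [apply meet_l| exact Iw]. eapply id_down; [apply meet_r| exact H0].
        - rewrite meet_bot. apply Gen_bot.
        - rewrite distr. apply Gen_join; auto.
        - eapply Gen_down; [|apply (IHG w Iw)]. apply meet_mono; [apply le_refl | exact H]. }
      rewrite <- (meet_idem x). apply K; auto.
    - intros G. apply (Gen_least (fun y => exists t, S t /\ y = imeet I t) _ (proj2_sig (imeet I (igen S)))); auto.
      intros J y [t [St ->]] Hy. destruct Hy as [Iy ty]. simpl. split; auto. eapply Gen_in; eauto. }
  rewrite E. apply igen_lub.
Qed.
End Ideals2.
Global Existing Instance ideal_FD.

Unset Default Proof Using.


Section BI.
Context {T : Type} {le : T -> T -> Prop} {C : CL le} {D : FD le} (Hb : forall x, compl le x).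

Definition isup (I : ideal_t le) : T := sup le (proj1_sig I).
Lemma in_isup (I : ideal_t le) x : proj1_sig I x -> le x (isup I).
Proof. intros; apply sup_ub; auto. Qed.
Lemma isup_adj I a : le (isup I) a <-> ideal_le le I (pr a).
Proof. split. intros H x Ix. simpl. eapply le_trans; [apply in_isup; exact Ix| exact H].
  intros H. apply sup_least. intros x Ix. apply (H x Ix). Qed.
Lemma isup_pr a : isup (pr a) = a.
Proof. apply le_anti. apply isup_adj. intros x; auto. apply in_isup. simpl; apply le_refl. Qed.
Lemma pr_le a b : ideal_le le (pr a) (pr b) <-> le a b.
Proof. split. intros H; exact (H a (le_refl a)). intros H x Hx; simpl in *; eapply le_trans; eauto. Qed.
Lemma pr_inj a b : pr a = pr b -> a = b.
Proof. intros E. apply le_anti; apply pr_le; rewrite E; intros x; auto. Qed.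
Lemma isup_mono I J : ideal_le le I J -> le (isup I) (isup J).
Proof. intros H. apply sup_mono; auto. Qed.
Lemma isup_sup S : isup (sup (ideal_le le) S) = sup le (image isup S).
Proof. apply le_anti.
  - apply isup_adj. apply sup_least. intros I SI. apply isup_adj. apply sup_ub. exists I; auto.
  - apply sup_least. intros y [I [SI ->]]. apply isup_mono. apply sup_ub; auto.
Qed.
Lemma isup_join I J : isup (join (ideal_le le) I J) = join le (isup I) (isup J).
Proof. unfold join at 1. rewrite isup_sup, image_pair. reflexivity. Qed.
Lemma isup_meet I J : isup (meet (ideal_le le) I J) = meet le (isup I) (isup J).
Proof. apply le_anti.
  - apply meet_glb; apply isup_mono; [apply meet_l | apply meet_r].
  - rewrite imeet_eq. unfold isup at 2. rewrite distr_sup. apply sup_least. intros y [t [Jt ->]].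
    rewrite meet_comm. unfold isup at 1. rewrite distr_sup. apply sup_least. intros z [u [Iu ->]].
    apply in_isup. simpl. split.
    eapply id_down; [apply meet_r | exact Iu]. eapply id_down; [apply meet_l | exact Jt].
Qed.
Lemma isup_bot : isup (bot (ideal_le le)) = bot le.
Proof. rewrite ibot_eq; apply isup_pr. Qed.
Lemma pr_join a b : join (ideal_le le) (pr a) (pr b) = pr (join le a b).
Proof. apply le_anti.
  - apply join_lub; apply pr_le; [apply join_l | apply join_r].
  - intros x Hx. simpl in Hx. eapply id_down; [exact Hx|]. apply id_join.
    exact (join_l (pr a) (pr b) a (le_refl a)).
    exact (join_r (pr a) (pr b) b (le_refl b)).
Qed.
Lemma pr_meet a b : meet (ideal_le le) (pr a) (pr b) = pr (meet le a b).
Proof. rewrite imeet_eq. apply ideal_eq. intros x; simpl. rewrite le_meet_iff. tauto. Qed.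
Lemma ineg I : neg (ideal_le le) I = pr (neg le (isup I)).
Proof. apply le_anti.
  - intros w Hw. simpl. apply neg_spec. unfold isup; rewrite distr_sup.
    apply le_bot_eq. apply sup_least. intros y [x [Ix ->]].
    assert (K : proj1_sig (meet (ideal_le le) (neg (ideal_le le) I) I) (meet le w x)).
    { rewrite imeet_eq. simpl. split. eapply id_down; [apply meet_l | exact Hw]. eapply id_down; [apply meet_r | exact Ix]. }
    rewrite meet_neg_l, ibot_eq in K. exact K.
  - apply neg_spec. apply le_bot_eq. rewrite ibot_eq. intros x Hx. rewrite imeet_eq in Hx. destruct Hx as [H1 H2].
    simpl in *. rewrite <- (meet_neg_l (isup I)). apply meet_glb; auto. apply in_isup; auto.
Qed.

Lemma Gen_list (S : ideal_t le -> Prop) y : Gen S y ->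
  exists l, (forall I, In I l -> S I) /\ Gen (fun I => In I l) y.
Proof. intros G; induction G.
  - exists (I :: nil); split. intros J [<- | []]; auto. eapply Gen_in; [left; reflexivity| exact H0].
  - exists nil; split. intros _ []. apply Gen_bot.
  - destruct IHG1 as [l1 [H1 K1]], IHG2 as [l2 [H2 K2]]. exists (l1 ++ l2); split.
    intros I HI; apply in_app_or in HI; destruct HI; auto.
    apply Gen_join; eapply Gen_mono; eauto; intros; apply in_or_app; auto.
  - destruct IHG as [l [H1 K1]]. exists l; split; auto. eapply Gen_down; eauto.
Qed.
Lemma compact_pr a : compact (ideal_le le) (pr a).
Proof. apply compact_iff. intros S H. rewrite isup_eq in H.
  destruct (Gen_list S a (H a (le_refl a))) as [l [Hl G]]. exists l; split; auto.
  rewrite isup_eq. intros x Hx. simpl in *. eapply Gen_down; eauto.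
Qed.
Lemma compact_ideal (I : ideal_t le) : compact (ideal_le le) I -> I = pr (isup I).
Proof. intros HI. rewrite compact_iff in HI.
  destruct (HI (fun J => exists x, proj1_sig I x /\ J = pr x)) as [l [Hl HIl]].
  { rewrite isup_eq. intros x Ix. simpl. eapply Gen_in. exists x; split; eauto. simpl; apply le_refl. }
  assert (K : forall l, (forall J, In J l -> exists x, proj1_sig I x /\ J = pr x) ->
      exists m, proj1_sig I m /\ ideal_le le (sup (ideal_le le) (fun J => In J l)) (pr m)).
  { clear HI Hl HIl l. intros l. induction l as [|J l IH]; intros H.
    - exists (bot le). split. apply id_bot. apply (@sup_least _ (ideal_le le) _). intros _ [].
    - destruct IH as [m [Im Hm]]. intros; apply H; right; auto.
      destruct (H J (or_introl eq_refl)) as [x [Ix ->]].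
      exists (join le x m). split. apply id_join; auto.
      rewrite sup_cons, <- pr_join. apply join_mono; auto. apply le_refl. }
  destruct (K l Hl) as [m [Im Hm]].
  assert (E : I = pr m).
  { apply le_anti. eapply le_trans; eauto. intros x Hx; simpl in Hx. eapply id_down; eauto. }
  rewrite E at 2. rewrite isup_pr. exact E.
Qed.

Lemma ideal_stonean : coherent (ideal_le le) /\ regular (ideal_le le) /\ extremally_disconnected (ideal_le le).
Proof. split; [|split].
  - apply coherent_intro.
    + intros I J HI HJ. rewrite (compact_ideal I HI), (compact_ideal J HJ), pr_meet. apply compact_pr.
    + rewrite itop_eq. apply compact_pr.
    + intros I x Ix. rewrite isup_eq. simpl. apply (Gen_in _ (pr x) x); [|simpl; apply le_refl].
      split. apply compact_pr. intros y Hy; simpl in Hy; eapply id_down; eauto.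
  - apply regular_intro. intros I x Ix. rewrite isup_eq. simpl. apply (Gen_in _ (pr x) x); [|simpl; apply le_refl].
    assert (Hx : ideal_le le (pr x) I) by (intros y Hy; exact (id_down I y x Hy Ix)).
    apply top_le_eq. rewrite ineg, isup_pr.
    eapply le_trans; [|apply (join_mono _ _ _ _ (le_refl _) Hx)].
    rewrite pr_join, join_comm, (Hb x : join le x (neg le x) = top le), itop_eq. apply le_refl.
  - apply ED_intro. intros I. unfold compl. rewrite !ineg, isup_pr, pr_join, (Hb (neg le (isup I)) : join le _ (neg le _) = top le), itop_eq.
    reflexivity.
Qed.
End BI.


Lemma cba_bool' {T} {le : T -> T -> Prop} {C : CL le} : is_cba le -> forall x, compl le x.
Proof. intros HA x. replace C with (cba_CL HA) by apply proof_irrelevance. apply cba_bool. Qed.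

Lemma meet_meet_distr {T} {le : T -> T -> Prop} {C : CL le} a x y :
  meet le a (meet le x y) = meet le (meet le a x) (meet le a y).
Proof. apply le_anti.
  - apply meet_glb; apply meet_mono; try apply le_refl. apply meet_l. apply meet_r.
  - apply meet_glb. eapply le_trans; [apply meet_l | apply meet_l].
    apply meet_glb. eapply le_trans; [apply meet_l | apply meet_r].
    eapply le_trans; [apply meet_r | apply meet_r].
Qed.

Lemma part2 : forall (T : Type) (le : T -> T -> Prop),
     localizable le -> hyperstonean (ideal_le le).
Proof.
  intros T le [HA Hloc].
  assert (C : CL le) by exact (cba_CL HA).
  assert (D : FD le) by exact (cba_FD HA).
  pose proof (cba_bool' HA) as Hb.
  split.
  { split. apply mk_frame; [apply ideal_CL | apply ideal_FD]. apply ideal_stonean; auto. }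
  intros I HI.
  assert (Hx : exists x, proj1_sig I x /\ x <> bot le).
  { apply NNPP; intros Hn. apply HI. intros J x Ix.
    assert (x = bot le). { apply NNPP; intros Hne. apply Hn; exists x; auto. }
    subst; apply id_bot. }
  destruct Hx as [x [Ix Hx0]].
  assert (Ha : exists a mu, faithful_cv_below le a mu /\ meet le a x <> bot le).
  { apply NNPP; intros Hn. apply Hx0.
    assert (Ht : le (top le) (neg le x)).
    { apply (proj2 (Hloc (top le) is_top_top)). intros a [mu Hmu].
      apply neg_spec. apply NNPP; intros Hne. apply Hn. exists a, mu; split; auto. }
    apply le_bot_eq. rewrite <- (meet_neg_r x). apply meet_glb. apply le_refl.
    eapply le_trans; [apply le_top | exact Ht]. }
  destruct Ha as [a [mu [[H0 [Hbot [Hmod [Hmono [Hcont Hfaith]]]]] Hax]]].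
  exists (fun J => mu (meet le a (isup J))).
  split; [|split].
  - split; [|split; [|split; [|split]]].
    + intros J. apply H0, meet_l.
    + intros B HB. rewrite (is_bot_eq _ HB), isup_bot, meet_bot. apply Hbot, is_bot_bot.
    + intros J K L M HL HM. rewrite (is_join_eq _ _ _ HL), (is_meet_eq _ _ _ HM), isup_join, isup_meet.
      rewrite distr, meet_meet_distr. apply Hmod; try apply meet_l. apply join_spec. apply meet_spec.
    + intros J K HJK. apply Hmono; try apply meet_l. apply meet_mono. apply le_refl. apply isup_mono; auto.
    + intros S U [[J0 SJ0] Hdir] HU. rewrite (lub_eq _ _ HU), isup_sup, distr_sup.
      set (Ds := fun y => exists t, image isup S t /\ y = meet le a t).
      assert (HDs : directed le Ds).
      { split. exists (meet le a (isup J0)), (isup J0); split; auto. exists J0; auto.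
        intros y1 y2 [t1 [[J1 [S1 ->]] ->]] [t2 [[J2 [S2 ->]] ->]].
        destruct (Hdir J1 J2 S1 S2) as [J3 [S3 [H1 H2]]].
        exists (meet le a (isup J3)). split. exists (isup J3); split; auto. exists J3; auto.
        split; apply meet_mono; try apply le_refl; apply isup_mono; auto. }
      pose proof (Hcont Ds (sup le Ds) (fun s Hs => match Hs with ex_intro _ t (conj _ E) => eq_ind_r (fun z => le z a) (meet_l a t) E end) HDs (sup_spec Ds)) as Hc.
      replace (fun r => exists s, S s /\ r = mu (meet le a (isup s))) with (fun r => exists s, Ds s /\ r = mu s); auto.
      apply set_ext; intros r; split.
      * intros [s [[t [[J [SJ ->]] ->]] ->]]. exists J; auto.
      * intros [J [SJ ->]]. exists (meet le a (isup J)); split; auto. exists (isup J); split; auto. exists J; auto.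
  - intros J N NN HN HNN. rewrite (is_neg_eq _ _ HNN), (is_neg_eq _ _ HN), !ineg, isup_pr, isup_pr.
    rewrite compl_nn; auto.
  - intros E. assert (K : le (meet le a x) (meet le a (isup I))).
    { apply meet_mono. apply le_refl. apply in_isup; auto. }
    pose proof (Hmono _ _ (meet_l _ _) (meet_l _ _) K) as Hm.
    pose proof (H0 (meet le a x) (meet_l _ _)) as Hp.
    assert (mu (meet le a x) = 0) by lra.
    apply Hax. apply is_bot_eq, Hfaith; auto. apply meet_l.
Qed.

Lemma part4 : forall (T : Type) (le : T -> T -> Prop), localizable le ->
     exists eps : T -> copen_t (ideal_le le),
       (forall a b, proj1_sig (proj1_sig (eps a)) b <-> le b a) /\
       order_iso le (copen_le (ideal_le le)) eps.
Proof.
  intros T le [HA _].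
  assert (C : CL le) by exact (cba_CL HA).
  assert (D : FD le) by exact (cba_FD HA).
  exists (fun a => exist _ (pr a) (compact_pr a)). split. intros; simpl; tauto.
  split; [|split].
  - intros y. exists (isup (proj1_sig y)). apply copen_eq. simpl. symmetry. apply compact_ideal, proj2_sig.
  - intros a b E. apply pr_inj. exact (f_equal (@proj1_sig _ _) E).
  - intros a b. unfold copen_le; simpl. rewrite pr_le; tauto.
Qed.


Lemma iimp_eq {T} {le : T -> T -> Prop} {C : CL le} {D : FD le} (I J : ideal_t le) :
  imp (ideal_le le) I J = iimp I J.
Proof. apply le_anti.
  - intros x Hx y Iy. simpl.
    assert (K : proj1_sig (meet (ideal_le le) (imp (ideal_le le) I J) I) (meet le x y)).
    { rewrite imeet_eq. simpl. split. eapply id_down; [apply meet_l | exact Hx]. eapply id_down; [apply meet_r| exact Iy]. }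
    exact (proj1 (imp_spec _ I J) (le_refl _) _ K).
  - apply imp_spec. rewrite imeet_eq. intros x [H1 H2]. simpl in H1. rewrite <- (meet_idem x). apply H1; auto.
Qed.

Lemma inf_neg {T} {le : T -> T -> Prop} {C : CL le} {D : FD le} (Hb : forall x, compl le x) S :
  inf le S = neg le (sup le (image (neg le) S)).
Proof. apply le_anti.
  - apply neg_spec. rewrite distr_sup. apply le_bot_eq. apply sup_least. intros y [t [[s [Ss ->]] ->]].
    rewrite meet_neg_le. apply le_refl. apply inf_lb; auto.
  - apply inf_greatest. intros s Ss. rewrite <- (compl_nn s (Hb s)). apply neg_anti. apply sup_ub. exists s; auto.
Qed.

Set Default Proof Using "All".
Section GH.
Context {TA TB : Type} {leA : TA -> TA -> Prop} {leB : TB -> TB -> Prop}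
  {CA : CL leA} {DA : FD leA} {CB : CL leB} {DB : FD leB}
  (HbA : forall x, compl leA x) (HbB : forall x, compl leB x)
  (g : TA -> TB) (Hg : sup_bool_hom leA leB g).

Lemma g_fh : frame_hom leA leB g.
Proof. destruct Hg as [H1 [H2 [H3 _]]]; split; auto. Qed.
Lemma g_neg x : g (neg leA x) = neg leB (g x).
Proof. destruct Hg as [_ [_ [_ H4]]].
  destruct (H4 x (neg leA x)) as [J M].
  - intros t Ht. rewrite (is_top_eq _ Ht), <- (HbA x). apply join_spec.
  - intros b Hb. rewrite (is_bot_eq _ Hb), <- (meet_neg_r x). apply meet_spec.
  - apply compl_uniq. symmetry; apply is_meet_eq, M, is_bot_bot. symmetry; apply is_join_eq, J, is_top_top.
Qed.
Lemma g_inf S : g (inf leA S) = inf leB (image g S).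
Proof. rewrite (inf_neg HbA), g_neg, (f_sup g g_fh), (inf_neg HbB). do 2 f_equal.
  apply set_ext; intros y; split.
  - intros [x [[s [Ss ->]] ->]]. exists (g s); split. exists s; auto. apply g_neg.
  - intros [x [[s [Ss ->]] ->]]. exists (neg leA s); split. exists s; auto. symmetry; apply g_neg.
Qed.

Definition h (b : TB) : TA := inf leA (fun a => leB b (g a)).
Lemma h_adj b a : leB b (g a) <-> leA (h b) a.
Proof. split. intros; apply inf_lb; auto.
  intros H. eapply le_trans; [|apply (f_mono g g_fh _ _ H)]. unfold h. rewrite g_inf.
  apply inf_greatest. intros y [x [Hx ->]]; auto. Qed.
Lemma h_unit b : leB b (g (h b)).
Proof. apply h_adj, le_refl. Qed.
Lemma h_mono b b' : leB b b' -> leA (h b) (h b').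
Proof. intros H; apply h_adj. eapply le_trans; [exact H | apply h_unit]. Qed.
Lemma h_join b b' : h (join leB b b') = join leA (h b) (h b').
Proof. apply le_anti.
  - apply h_adj. rewrite (f_join g g_fh). apply join_mono; apply h_unit.
  - apply join_lub; apply h_mono; [apply join_l | apply join_r].
Qed.
Lemma h_frob b a : h (meet leB b (g a)) = meet leA (h b) a.
Proof. apply le_anti.
  - apply meet_glb. apply h_mono, meet_l. apply h_adj, meet_r.
  - assert (E : b = join leB (meet leB b (g a)) (meet leB b (g (neg leA a)))).
    { rewrite <- distr, <- (f_join g g_fh), (HbA a : join leA a (neg leA a) = top leA), (f_top g g_fh).
      symmetry; apply meet_top. }
    assert (K : leA (h b) (join leA (h (meet leB b (g a))) (neg leA a))).
    { rewrite E at 1. rewrite h_join. apply join_mono. apply le_refl. apply h_adj, meet_r. }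
    eapply le_trans. apply meet_mono; [exact K | apply le_refl].
    rewrite distr_r, meet_neg_l, join_bot. apply meet_l.
Qed.

Definition Fi (I : ideal_t leA) : ideal_t leB.
Proof. refine (exist _ (fun b => exists a, proj1_sig I a /\ leB b (g a)) _).
  apply mk_ideal.
  - intros x y H [a [Ia Ha]]. exists a; split; auto. eapply le_trans; eauto.
  - exists (bot leA); split. apply id_bot. apply bot_le.
  - intros x y [a [Ia Ha]] [a' [Ia' Ha']]. exists (join leA a a'); split. apply id_join; auto.
    rewrite (f_join g g_fh). apply join_mono; auto.
Defined.
Lemma Fi_mem I b : proj1_sig (Fi I) b <-> proj1_sig I (h b).
Proof. simpl; split. intros [a [Ia Ha]]. eapply id_down; [apply h_adj; exact Ha | exact Ia].
  intros H. exists (h b); split; auto. apply h_unit. Qed.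

Lemma Fi_open : open_frame_hom (ideal_le leA) (ideal_le leB) Fi.
Proof. split; [split; [|split]|split].
  - intros S u Hu. rewrite (lub_eq _ _ Hu), isup_eq.
    replace (Fi (igen S)) with (igen (image Fi S)). apply igen_lub.
    apply ideal_eq. intros b; split.
    + intros G. apply (Gen_least (image Fi S) _ (proj2_sig (Fi (igen S)))); auto.
      intros J y [I [SI ->]] [a [Ia Hya]]. exists a; split; auto. eapply Gen_in; eauto.
    + intros [a [Ga Hba]]. simpl in Ga. revert b Hba. induction Ga; intros b Hb.
      * eapply Gen_in. exists I; split; eauto. exists x; auto.
      * rewrite (f_bot g g_fh) in Hb. eapply Gen_down; [exact Hb| apply Gen_bot].
      * rewrite (f_join g g_fh) in Hb. rewrite <- (meet_eq_l _ _ Hb), distr.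
        apply Gen_join; [apply IHGa1 | apply IHGa2]; apply meet_r.
      * apply IHGa. eapply le_trans; [exact Hb | apply (f_mono g g_fh); auto].
  - intros I J M HM. rewrite (is_meet_eq _ _ _ HM), imeet_eq.
    replace (Fi (imeet I J)) with (imeet (Fi I) (Fi J)). apply imeet_spec.
    apply ideal_eq; intros b. transitivity (proj1_sig (Fi I) b /\ proj1_sig (Fi J) b). reflexivity.
    rewrite !Fi_mem. simpl; tauto.
  - intros t Ht X b _. rewrite (is_top_eq _ Ht), itop_eq. exists (top leA); split. simpl; apply le_refl.
    rewrite (f_top g g_fh). apply le_top.
  - intros S l Hl. rewrite (glb_eq _ _ Hl), iinf_eq.
    replace (Fi (iInter S)) with (iInter (image Fi S)). apply iInter_spec.
    apply ideal_eq; intros b. rewrite Fi_mem. simpl. split.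
    + intros H I SI. apply Fi_mem, H. exists I; auto.
    + intros H J [I [SI ->]]. apply Fi_mem, H; auto.
  - intros I J K HK. rewrite (is_imp_eq _ _ _ HK), iimp_eq.
    replace (Fi (iimp I J)) with (imp (ideal_le leB) (Fi I) (Fi J)). apply is_imp_imp.
    rewrite iimp_eq. apply ideal_eq; intros b. rewrite Fi_mem. simpl. split.
    + intros H y Iy. rewrite <- h_frob. apply Fi_mem, H. apply Fi_mem. eapply id_down; [|exact Iy].
      apply h_adj, le_refl.
    + intros H b' Hb'. apply Fi_mem in Hb'. apply Fi_mem. eapply id_down; [|apply (H _ Hb')].
      apply meet_glb; apply h_mono; [apply meet_l | apply meet_r].
Qed.
End GH.

Lemma part6 : forall (TA TB : Type) (leA : TA -> TA -> Prop) (leB : TB -> TB -> Prop)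
          (g : TA -> TB),
     localizable leA -> localizable leB -> sup_bool_hom leA leB g ->
     exists F : ideal_t leA -> ideal_t leB,
       (forall I b, proj1_sig (F I) b <-> exists a, proj1_sig I a /\ leB b (g a)) /\
       open_frame_hom (ideal_le leA) (ideal_le leB) F.
Proof.
  intros TA TB leA leB g [HA _] [HB _] Hg.
  assert (CA : CL leA) by exact (cba_CL HA).
  assert (DA : FD leA) by exact (cba_FD HA).
  assert (CB : CL leB) by exact (cba_CL HB).
  assert (DB : FD leB) by exact (cba_FD HB).
  pose proof (cba_bool' HA) as HbA. pose proof (cba_bool' HB) as HbB.
  exists (Fi HbA HbB g Hg). split. intros; simpl; tauto. apply Fi_open.
Qed.

Lemma part8 : forall (TA TB : Type) (leA : TA -> TA -> Prop) (leB : TB -> TB -> Prop)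
          (g : TA -> TB),
     localizable leA -> localizable leB -> sup_bool_hom leA leB g ->
     forall a b, (exists a', leA a' a /\ leB b (g a')) <-> leB b (g a).
Proof.
  intros TA TB leA leB g [[[RA [TrA AA]] _] _] [[[RB [TrB AB]] _] _] [_ [Hm _]] a b. split.
  - intros [a' [H1 H2]].
    assert (M : is_meet leA a' a a').
    { split. intros z [-> | ->]; auto. intros v Hv. apply Hv; left; auto. }
    apply Hm in M. eapply TrB; [exact H2|]. apply (proj1 M); right; auto.
  - intros H; exists a; split; auto.
Qed.

Theorem mainTheorem9 :
  (* (1) COpen(H) is localizable for hyperstonean H *)
  (forall (T : Type) (le : T -> T -> Prop),
     hyperstonean le -> localizable (copen_le le)) /\
  (* (2) Ideal(A) is hyperstonean for localizable A *)
  (forall (T : Type) (le : T -> T -> Prop),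
     localizable le -> hyperstonean (ideal_le le)) /\
  (* (3) unit: Ideal(COpen H) -> H, J |-> join J, is a frame isomorphism *)
  (forall (T : Type) (le : T -> T -> Prop), hyperstonean le ->
     exists eta : ideal_t (copen_le le) -> T,
       (forall J, lub le (fun x => exists c, proj1_sig J c /\ x = proj1_sig c) (eta J)) /\
       order_iso (ideal_le (copen_le le)) le eta) /\
  (* (4) counit: A -> COpen(Ideal A), a |-> principal ideal, is an isomorphism *)
  (forall (T : Type) (le : T -> T -> Prop), localizable le ->
     exists eps : T -> copen_t (ideal_le le),
       (forall a b, proj1_sig (proj1_sig (eps a)) b <-> le b a) /\
       order_iso le (copen_le (ideal_le le)) eps) /\
  (* (5) COpen on morphisms: open locale maps H -> K (frame homs f : K -> H)
         restrict to supremum-preserving Boolean homs COpen K -> COpen H *)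
  (forall (TH TK : Type) (leH : TH -> TH -> Prop) (leK : TK -> TK -> Prop)
          (f : TK -> TH),
     hyperstonean leH -> hyperstonean leK -> open_frame_hom leK leH f ->
     exists g : copen_t leK -> copen_t leH,
       (forall c, proj1_sig (g c) = f (proj1_sig c)) /\
       sup_bool_hom (copen_le leK) (copen_le leH) g) /\
  (* (6) Ideal on morphisms: a supremum-preserving Boolean hom g : A -> B gives
         the open locale map Ideal B -> Ideal A with frame hom I |-> down(g(I)) *)
  (forall (TA TB : Type) (leA : TA -> TA -> Prop) (leB : TB -> TB -> Prop)
          (g : TA -> TB),
     localizable leA -> localizable leB -> sup_bool_hom leA leB g ->
     exists F : ideal_t leA -> ideal_t leB,
       (forall I b, proj1_sig (F I) b <-> exists a, proj1_sig I a /\ leB b (g a)) /\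
       open_frame_hom (ideal_le leA) (ideal_le leB) F) /\
  (* (7) naturality of the unit: eta_H (Ideal(COpen f) J) = f (eta_K J) *)
  (forall (TH TK : Type) (leH : TH -> TH -> Prop) (leK : TK -> TK -> Prop)
          (f : TK -> TH),
     hyperstonean leH -> hyperstonean leK -> open_frame_hom leK leH f ->
     forall (J : ideal_t (copen_le leK)) (u : TK),
       lub leK (fun x => exists c, proj1_sig J c /\ x = proj1_sig c) u ->
       lub leH (fun x => exists c : copen_t leH,
                   (exists d, proj1_sig J d /\ leH (proj1_sig c) (f (proj1_sig d))) /\
                   x = proj1_sig c) (f u)) /\
  (* (8) naturality of the counit: Ideal(g) (down a) = down (g a) *)
  (forall (TA TB : Type) (leA : TA -> TA -> Prop) (leB : TB -> TB -> Prop)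
          (g : TA -> TB),
     localizable leA -> localizable leB -> sup_bool_hom leA leB g ->
     forall a b, (exists a', leA a' a /\ leB b (g a')) <-> leB b (g a)).
Proof.
  split. exact part1. split. exact part2. split. exact part3. split. exact part4.
  split. exact part5. split. exact part6. split. exact part7. exact part8.
Qed.
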